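(* Let $k\ge 1$ and let $\{v_1,\ldots,v_k\}$ be a set of $k$ distinct integers that does not have the LR property. Then $\operatorname{lcm}(2,3,\ldots,k+1)$ divides $\prod_{i=1}^{k} v_i$.
   Context: For a real number $x$, $\|x\|$ denotes the distance from $x$ to the nearest integer. A finite set $S$ of $m$ integers has the LR (lonely runner) property if there exists a real $t$ such that $\|tv\|\ge \frac{1}{m+1}$ for all $v\in S$. *)

(* Defs.v *)
From Stdlib Require Import Reals ZArith List.
Open Scope R_scope.

(* ||x|| : distance from x to the nearest integer.
   frac_part x = x - floor x lies in [0,1); the nearest integer is floor x or floor x + 1. *)
Definition dist_nearest_int (x : R) : R := Rmin (frac_part x) (1 - frac_part x).

(* A finite set S of m integers (given as a duplicate-free list, m = length S)
   has the LR (lonely runner) property. *)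
Definition LR_property (S : list Z) : Prop :=
  exists t : R, forall v : Z, In v S ->
    dist_nearest_int (t * IZR v) >= 1 / (INR (length S) + 1).

Definition lcm_upto (k : nat) : Z :=
  fold_right Z.lcm 1%Z (map Z.of_nat (seq 2 k)).

Definition prodZ (l : list Z) : Z := fold_right Z.mul 1%Z l.

(* Main.v *)
Require Import Defs.
From Stdlib Require Import Reals ZArith List Lra Lia.

Lemma lcm_list_div (l : list Z) (n : Z) :
  (forall x, In x l -> (x | n)%Z) -> (fold_right Z.lcm 1%Z l | n)%Z.
Proof.
  induction l as [|a l IH]; intros H; simpl.
  - apply Z.divide_1_l.
  - apply Z.lcm_least; [apply H; now left | apply IH; intros; apply H; now right].
Qed.

Lemma div_prod (l : list Z) (x m : Z) : In x l -> (m | x)%Z -> (m | prodZ l)%Z.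
Proof.
  induction l as [|a l IH]; simpl; intros Hin Hd; [contradiction|].
  destruct Hin as [<-|Hin].
  - now apply Z.divide_mul_l.
  - apply Z.divide_mul_r. now apply IH.
Qed.

Lemma int_part_eq (q : Z) (y : R) : 0 <= y < 1 -> Int_part (IZR q + y) = q.
Proof.
  intros Hy. destruct (base_Int_part (IZR q + y)) as [H1 H2].
  set (z := Int_part (IZR q + y)) in *.
  assert (A : (z < q + 1)%Z) by (apply lt_IZR; rewrite plus_IZR; lra).
  assert (B : (q < z + 1)%Z) by (apply lt_IZR; rewrite plus_IZR; lra).
  lia.
Qed.

Lemma key (m : Z) (v : Z) (K : R) :
  (2 <= m)%Z -> 1 / IZR m >= K ->
  dist_nearest_int (1 / IZR m * IZR v) < K -> (m | v)%Z.
Proof.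
  intros Hm HK Hd.
  pose proof (Z.div_mod v m ltac:(lia)) as E.
  pose proof (Z.mod_pos_bound v m ltac:(lia)) as Br.
  set (q := (v / m)%Z) in *. set (r := (v mod m)%Z) in *.
  assert (Hmpos : 0 < IZR m) by (apply IZR_lt; lia).
  assert (Hx : 1 / IZR m * IZR v = IZR q + IZR r / IZR m).
  { rewrite E, plus_IZR, mult_IZR. field. lra. }
  assert (Hr0 : 0 <= IZR r) by (apply IZR_le; lia).
  assert (Hrm : IZR r < IZR m) by (apply IZR_lt; lia).
  assert (Hy : 0 <= IZR r / IZR m < 1).
  { split. unfold Rdiv; apply Rmult_le_pos; [lra| left; apply Rinv_0_lt_compat; lra].
    apply (Rmult_lt_reg_r (IZR m)); [lra|]. field_simplify; lra. }
  assert (Hf : frac_part (1 / IZR m * IZR v) = IZR r / IZR m).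
  { unfold frac_part. rewrite Hx, int_part_eq by exact Hy. ring. }
  unfold dist_nearest_int in Hd. rewrite Hf in Hd.
  destruct (Z.eq_dec r 0) as [Hz|Hnz].
  - exists q. lia.
  - exfalso.
    assert (H1 : 1 <= IZR r) by (apply IZR_le; lia).
    assert (H2 : IZR r + 1 <= IZR m) by (rewrite <- plus_IZR; apply IZR_le; lia).
    assert (G1 : 1 / IZR m <= IZR r / IZR m)
      by (unfold Rdiv; apply Rmult_le_compat_r; [left; apply Rinv_0_lt_compat; lra | lra]).
    assert (G2 : 1 / IZR m <= 1 - IZR r / IZR m).
    { replace (1 - IZR r / IZR m) with ((IZR m - IZR r) / IZR m) by (field; lra).
      unfold Rdiv; apply Rmult_le_compat_r; [left; apply Rinv_0_lt_compat; lra | lra]. }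
    unfold Rmin in Hd. destruct (Rle_dec _ _); lra.
Qed.

Theorem lemma3 (k : nat) (v : list Z) :
  (1 <= k)%nat -> length v = k -> NoDup v -> ~ LR_property v ->
  (lcm_upto k | prodZ v)%Z.
Proof.
  intros Hk Hlen _ HLR. unfold lcm_upto. apply lcm_list_div.
  intros x Hx. apply in_map_iff in Hx. destruct Hx as [n [<- Hn]].
  apply in_seq in Hn.
  set (m := Z.of_nat n).
  assert (Hm : (2 <= m)%Z) by (unfold m; lia).
  destruct (Znumtheory.Zdivide_dec m (prodZ v)) as [D|ND]; [exact D|].
  exfalso. apply HLR. exists (1 / IZR m). intros w Hw.
  destruct (Rlt_dec (dist_nearest_int (1 / IZR m * IZR w)) (1 / (INR (length v) + 1))) as [Hl|Hl].
  - exfalso. apply ND. apply (div_prod v w m Hw).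
    apply (key m w (1 / (INR (length v) + 1)) Hm); [|exact Hl].
    rewrite Hlen. unfold m. rewrite <- INR_IZR_INZ.
    assert (1 <= INR n) by (apply (le_INR 1); lia).
    assert (INR n <= INR k + 1) by (rewrite <- S_INR; apply le_INR; lia).
    apply Rle_ge. apply Rmult_le_compat_l; [lra|]. apply Rinv_le_contravar; lra.
  - now apply Rnot_lt_ge.
Qed.
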